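(* There is a function $\varepsilon\colon\mathbb{N}\to\mathbb{R}$ with $\varepsilon(n)\to0$ as $n\to\infty$ such that for every positive integer $n$ and every function $f\colon\{0,1\}^n\to\mathbb{R}$ with a unique global minimum, the expected optimization time of the (1+1)~EA minimizing $f$ is at least $(1-\varepsilon(n))\,\mathrm{e}\, n\ln(n)$.
   Context: The (1+1)~EA minimizing $f\colon\{0,1\}^n\to\mathbb{R}$: choose $x^{(0)}\in\{0,1\}^n$ uniformly at random; for $t=0,1,2,\dots$, sample $y^{(t)}$ by flipping each bit of $x^{(t)}$ independently with probability $1/n$; set $x^{(t+1)}:=y^{(t)}$ if $f(y^{(t)})\le f(x^{(t)})$ and $x^{(t+1)}:=x^{(t)}$ otherwise. The optimization time is the random variable $T_f=\min\{t\in\mathbb{N}: f(x^{(t)})=\min_{z\in\{0,1\}^n}f(z)\}$. *)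

(* Defs.v *)
From Stdlib Require Import Reals List Bool.
Open Scope R_scope.

Fixpoint bits (n : nat) : list (list bool) :=
  match n with
  | O => nil :: nil
  | S m => map (cons false) (bits m) ++ map (cons true) (bits m)
  end.

Definition sumB (n : nat) (g : list bool -> R) : R :=
  fold_right (fun x s => g x + s) 0 (bits n).

(* probability that standard bit mutation (rate 1/n) turns x into y *)
Definition mut (n : nat) (x y : list bool) : R :=
  fold_right Rmult 1
    (map (fun p => if Bool.eqb (fst p) (snd p) then 1 - / INR n else / INR n)
         (combine x y)).

Definition fmin (n : nat) (f : list bool -> R) : R :=
  fold_right (fun z m => Rmin (f z) m) (f (repeat false n)) (bits n).

Definition notopt (n : nat) (f : list bool -> R) (x : list bool) : R :=
  if Req_EM_T (f x) (fmin n f) then 0 else 1.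

Definition unique_min (n : nat) (f : list bool -> R) : Prop :=
  exists xs, In xs (bits n) /\
    forall z, In z (bits n) -> z <> xs -> f xs < f z.

(* q n f t y = P(x^(t) = y and f(x^(s)) <> min f for all s <= t)
   for the (1+1) EA minimizing f (uniform initialization, mutation rate 1/n,
   accept y iff f y <= f x). *)
Fixpoint qEA (n : nat) (f : list bool -> R) (t : nat) (y : list bool) : R :=
  match t with
  | O => notopt n f y / 2 ^ n
  | S t' =>
      notopt n f y *
      (sumB n (fun x => qEA n f t' x *
                        (if Rle_dec (f y) (f x) then mut n x y else 0))
       + qEA n f t' y *
         sumB n (fun z => if Rle_dec (f z) (f y) then 0 else mut n y z))
  end.

Definition tailEA (n : nat) (f : list bool -> R) (t : nat) : R :=
  sumB n (qEA n f t).

(* E[T_f] = sum_{t>=0} P(T_f > t); "E[T_f] >= b" (possibly E[T_f] = +infinity)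
   is expressed as: every r < b is exceeded by some partial sum. *)
Definition expected_time_ge (n : nat) (f : list bool -> R) (b : R) : Prop :=
  forall r, r < b -> exists N, r < sum_f_R0 (tailEA n f) N.

(* Main.v *)
Require Import Defs.
From Stdlib Require Import Reals List Lra Lia Bool Arith.
Open Scope R_scope.

Definition sumL (l : list (list bool)) (g : list bool -> R) : R :=
  fold_right (fun x s => g x + s) 0 l.

Lemma sumL_app l1 l2 g : sumL (l1 ++ l2) g = sumL l1 g + sumL l2 g.
Proof. induction l1; simpl; [lra|]. unfold sumL in *; simpl; rewrite IHl1; lra. Qed.

Lemma sumL_map (h : list bool -> list bool) l g : sumL (map h l) g = sumL l (fun y => g (h y)).
Proof. induction l; simpl; auto. unfold sumL in *; simpl; rewrite IHl; lra. Qed.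

Lemma sumL_plus l g1 g2 : sumL l (fun y => g1 y + g2 y) = sumL l g1 + sumL l g2.
Proof. induction l; unfold sumL in *; simpl; [lra|]. rewrite IHl; lra. Qed.

Lemma sumL_scal l c g : sumL l (fun y => c * g y) = c * sumL l g.
Proof. induction l; unfold sumL in *; simpl; [lra|]. rewrite IHl; lra. Qed.

Lemma sumL_ext l g1 g2 : (forall y, In y l -> g1 y = g2 y) -> sumL l g1 = sumL l g2.
Proof. induction l; intros H; unfold sumL in *; simpl; auto.
  rewrite H by (left; auto). rewrite IHl; auto. intros; apply H; right; auto. Qed.

Lemma sumL_le l g1 g2 : (forall y, In y l -> g1 y <= g2 y) -> sumL l g1 <= sumL l g2.
Proof. induction l; intros H; unfold sumL in *; simpl; [lra|].
  assert (g1 a <= g2 a) by (apply H; left; auto).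
  assert (fold_right (fun x s => g1 x + s) 0 l <= fold_right (fun x s => g2 x + s) 0 l)
    by (apply IHl; intros; apply H; right; auto). lra. Qed.

Lemma sumL_swap l1 l2 (h : list bool -> list bool -> R) :
  sumL l1 (fun x => sumL l2 (fun y => h x y)) = sumL l2 (fun y => sumL l1 (fun x => h x y)).
Proof. induction l1.
  - unfold sumL; simpl. induction l2; simpl; lra.
  - change (sumL (a :: l1) (fun x => sumL l2 (fun y => h x y))) with
      (sumL l2 (fun y => h a y) + sumL l1 (fun x => sumL l2 (fun y => h x y))).
    rewrite IHl1, <- sumL_plus. reflexivity. Qed.

Lemma sumB_S k g : sumB (S k) g = sumB k (fun y => g (false :: y)) + sumB k (fun y => g (true :: y)).
Proof. unfold sumB; simpl. fold (sumL (map (cons false) (bits k) ++ map (cons true) (bits k)) g).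
  rewrite sumL_app, !sumL_map. reflexivity. Qed.

Lemma bits_length k y : In y (bits k) -> length y = k.
Proof. revert y; induction k; simpl; intros y H.
  - destruct H as [<-|[]]; auto.
  - apply in_app_or in H; destruct H as [H|H]; apply in_map_iff in H;
    destruct H as [z [<- Hz]]; simpl; f_equal; auto. Qed.

Lemma bits_complete k y : length y = k -> In y (bits k).
Proof. revert y; induction k; intros y H; destruct y; simpl in *; try discriminate; auto.
  injection H as H. apply in_or_app. destruct b; [right|left]; apply in_map; auto. Qed.

Lemma bits_len k : length (bits k) = (2 ^ k)%nat.
Proof. induction k; simpl; auto. rewrite length_app, !length_map. lia. Qed.

Lemma sumB_eq n g : sumB n g = sumL (bits n) g.
Proof. reflexivity. Qed.

Definition mutp (p : R) (x y : list bool) : R :=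
  fold_right Rmult 1
    (map (fun pr => if Bool.eqb (fst pr) (snd pr) then 1 - p else p) (combine x y)).

Lemma mut_mutp n x y : mut n x y = mutp (/ INR n) x y.
Proof. reflexivity. Qed.

Lemma mutp_cons p a x c y : mutp p (a :: x) (c :: y) = (if Bool.eqb a c then 1 - p else p) * mutp p x y.
Proof. reflexivity. Qed.

Fixpoint hdist (y o : list bool) : nat :=
  match y, o with
  | a :: y', b :: o' => ((if Bool.eqb a b then 0 else 1) + hdist y' o')%nat
  | _, _ => 0%nat
  end.

Fixpoint nr (y o : list bool) : nat :=
  match y, o with
  | a :: y', b :: o' => ((if Bool.eqb a b then 1 else 0) + nr y' o')%nat
  | _, _ => 0%nat
  end.

Fixpoint Ex (p : R) (x o : list bool) (phi : nat -> nat -> nat -> R) : R :=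
  match x, o with
  | a :: x', b :: o' =>
      if Bool.eqb a b then
        (1 - p) * Ex p x' o' phi + p * Ex p x' o' (fun w u r => phi w u (S r))
      else
        (1 - p) * Ex p x' o' (fun w u r => phi w (S u) r) + p * Ex p x' o' (fun w u r => phi (S w) u r)
  | _, _ => phi 0%nat 0%nat 0%nat
  end.

Lemma Ex_ext p x : forall o phi1 phi2, (forall w u r, phi1 w u r = phi2 w u r) ->
  Ex p x o phi1 = Ex p x o phi2.
Proof. induction x as [|a x IH]; intros o f g H; destruct o as [|b o]; simpl; auto.
  destruct (Bool.eqb a b); rewrite !(IH o _ _ ltac:(intros; apply H)); reflexivity. Qed.

Lemma nr_hd x o : length x = length o -> (nr x o + hdist x o)%nat = length x.
Proof. revert o; induction x as [|a x IH]; intros [|b o] H; simpl in *; try discriminate; auto.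
  injection H as H. specialize (IH o H). destruct (Bool.eqb a b); lia. Qed.

Lemma key_sum p k : forall x o, length x = k -> length o = k -> forall G,
  sumB k (fun y => mutp p x y * G (hdist y o)) = Ex p x o (fun w u r => G (u + r)%nat).
Proof.
  induction k as [|k IH]; intros x o Hx Ho G.
  - destruct x, o; simpl in *; try discriminate. unfold sumB; simpl.
    unfold mutp; simpl. ring.
  - destruct x as [|a x], o as [|b o]; try discriminate. simpl in Hx, Ho.
    injection Hx as Hx; injection Ho as Ho.
    rewrite sumB_S.
    assert (Hc: forall c, sumB k (fun y => mutp p (a::x) (c::y) * G (hdist (c::y) (b::o))) =
       (if Bool.eqb a c then 1-p else p) *
         Ex p x o (fun w u r => G ((if Bool.eqb c b then 0 else 1) + (u + r))%nat)).
    { intro c. rewrite <- (IH x o Hx Ho (fun j => G ((if Bool.eqb c b then 0 else 1) + j)%nat)).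
      rewrite !sumB_eq, <- sumL_scal. apply sumL_ext. intros y _.
      rewrite mutp_cons. simpl hdist. ring. }
    rewrite !Hc. destruct a, b; simpl;
    first [ (f_equal; f_equal; try reflexivity; apply Ex_ext; intros; f_equal; lia)
          | (rewrite Rplus_comm; f_equal; f_equal; try reflexivity; apply Ex_ext; intros; f_equal; lia) ].
Qed.

Lemma Ex_lin (p : R) (x : list bool) : forall o a b (f1 f2 : nat -> nat -> nat -> R),
  Ex p x o (fun w u r => a * f1 w u r + b * f2 w u r) = a * Ex p x o f1 + b * Ex p x o f2.
Proof. induction x as [|c x IH]; intros [|d o] a b f1 f2; simpl; auto.
  destruct (Bool.eqb c d); rewrite !IH; ring. Qed.

Lemma Ex_const (p : R) (x : list bool) : forall o c, Ex p x o (fun _ _ _ => c) = c.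
Proof. induction x as [|a x IH]; intros [|b o] c; simpl; auto.
  destruct (Bool.eqb a b); rewrite !IH; ring. Qed.

Lemma Ex_mono (p : R) (x : list bool) : 0 <= p <= 1 -> forall o (f1 f2 : nat -> nat -> nat -> R),
  (forall w u r, (w + u)%nat = hdist x o -> f1 w u r <= f2 w u r) -> Ex p x o f1 <= Ex p x o f2.
Proof. intros Hp; induction x as [|a x IH]; intros [|b o] f1 f2 H; simpl in *; try (apply H; lia).
  destruct (Bool.eqb a b).
    + assert (Ex p x o f1 <= Ex p x o f2) by (apply IH; intros; apply H; lia).
      assert (Ex p x o (fun w u r => f1 w u (S r)) <= Ex p x o (fun w u r => f2 w u (S r)))
        by (apply IH; intros; apply H; lia).
      nra.
    + assert (Ex p x o (fun w u r => f1 w (S u) r) <= Ex p x o (fun w u r => f2 w (S u) r))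
        by (apply IH; intros; apply H; lia).
      assert (Ex p x o (fun w u r => f1 (S w) u r) <= Ex p x o (fun w u r => f2 (S w) u r))
        by (apply IH; intros; apply H; lia).
      nra.
Qed.

Lemma Ex_r0 (p : R) (x : list bool) : forall o (g : nat -> nat -> R),
  Ex p x o (fun w u r => (if (r =? 0)%nat then 1 else 0) * g w u) =
  (1 - p) ^ (nr x o) * Ex p x o (fun w u r => g w u).
Proof. induction x as [|a x IH]; intros [|b o] g; cbn [Ex hdist nr]; try (simpl; ring).
  destruct (Bool.eqb a b); cbn [Ex hdist nr Nat.add].
  - rewrite IH. simpl Nat.add. rewrite (Ex_ext _ _ _ (fun w u r => (if (S r =? 0)%nat then 1 else 0) * g w u)
                          (fun _ _ _ => 0)) by (intros; cbv [Nat.eqb]; ring).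
    rewrite Ex_const. rewrite <- tech_pow_Rmult. ring.
  - simpl Nat.add. rewrite (IH o (fun w u => g w (S u))), (IH o (fun w u => g (S w) u)). ring.
Qed.

Lemma Ex_w (p : R) (x : list bool) : forall o c, Ex p x o (fun w u r => c + INR w) = c + p * INR (hdist x o).
Proof. induction x as [|a x IH]; intros [|b o] c; cbn [Ex hdist nr]; try (simpl; ring).
  destruct (Bool.eqb a b); cbn [Ex hdist nr Nat.add].
  - rewrite !IH. ring.
  - rewrite IH. rewrite (Ex_ext _ _ _ _ (fun w u r => (c + 1) + INR w)) by (intros; rewrite S_INR; ring).
    rewrite IH. rewrite S_INR. ring.
Qed.

Lemma Ex_rsq (p : R) (x : list bool) : forall o c, Ex p x o (fun w u r => (c + INR r) ^ 2) =
  (c + p * INR (nr x o)) ^ 2 + p * (1 - p) * INR (nr x o).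
Proof. induction x as [|a x IH]; intros [|b o] c; cbn [Ex hdist nr]; try (simpl; ring).
  destruct (Bool.eqb a b); cbn [Ex hdist nr Nat.add].
  - rewrite IH. rewrite (Ex_ext _ _ _ _ (fun w u r => ((c + 1) + INR r)^2)) by (intros; rewrite S_INR; ring).
    rewrite IH. rewrite S_INR. ring.
  - rewrite !IH. ring.
Qed.

Lemma Ex_pair (p : R) (x : list bool) : p <> 1 -> forall o (h : nat -> nat -> R),
  Ex p x o (fun w u r => INR w * h (w - 1)%nat (S u)) =
  p / (1 - p) * Ex p x o (fun w u r => INR u * h w u).
Proof. intros Hp1; induction x as [|a x IH]; intros [|b o] h; cbn [Ex hdist nr]; try (simpl; field; lra).
  destruct (Bool.eqb a b); cbn [Ex hdist nr Nat.add].
  - rewrite IH. field; lra.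
  - rewrite (IH o (fun a b => h a (S b))).
    rewrite (Ex_ext _ _ _ (fun w u r => INR (S w) * h (S w - 1)%nat (S u))
               (fun w u r => 1 * (INR w * (fun a b => h (S a) b) (w - 1)%nat (S u)) + 1 * h w (S u))).
    2:{ intros w u r. rewrite S_INR. destruct w; simpl.
        - ring.
        - rewrite Nat.sub_0_r. ring. }
    rewrite Ex_lin, (IH o (fun a b => h (S a) b)).
    rewrite (Ex_ext _ _ _ (fun w u r => INR (S u) * h w (S u))
               (fun w u r => 1 * (INR u * h w (S u)) + 1 * h w (S u)))
      by (intros; rewrite S_INR; ring).
    rewrite Ex_lin. field. lra.
Qed.

Fixpoint Hs (k : nat) : R := match k with O => 0 | S k' => Hs k' + / INR (S k') end.

Lemma Hs_nonneg k : 0 <= Hs k.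
Proof. induction k; cbn [Hs]; [lra|]. pose proof (pos_INR k).
  assert (0 < / INR (S k)) by (apply Rinv_0_lt_compat; rewrite S_INR; lra). lra. Qed.

Lemma Hs_mono j k : (j <= k)%nat -> Hs j <= Hs k.
Proof. induction 1; [lra|]. cbn [Hs]. assert (0 < / INR (S m)) by (apply Rinv_0_lt_compat; rewrite S_INR; pose proof (pos_INR m); lra). lra. Qed.

Lemma Hs_diff j k : (j <= k)%nat -> Hs k - Hs j <= INR (k - j) / INR (S j).
Proof. induction 1.
  - rewrite Nat.sub_diag. simpl. unfold Rdiv. lra.
  - cbn [Hs]. replace (S m - j)%nat with (S (m - j)) by lia. rewrite (S_INR (m - j)).
    assert (/ INR (S m) <= / INR (S j)).
    { apply Rinv_le_contravar. rewrite S_INR; pose proof (pos_INR j); lra. apply le_INR; lia. }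
    assert (0 < INR (S j)) by (rewrite S_INR; pose proof (pos_INR j); lra).
    unfold Rdiv in *. assert (INR (m - j) * / INR (S j) + / INR (S j) = (INR (m - j) + 1) * / INR (S j)) by ring. lra.
Qed.

Lemma pow_le_anti (q : R) a b : 0 <= q <= 1 -> (b <= a)%nat -> q ^ a <= q ^ b.
Proof. intros Hq; induction 1; [lra|]. simpl. pose proof (pow_le q m (proj1 Hq)). nra. Qed.

Definition hA (m : nat) (a b : nat) : R := if ((1 <=? b) && (b <=? m))%nat then / INR b else 0.
Definition hB (m : nat) (a b : nat) : R := if ((1 <=? a) && (1 <=? b) && (b <=? m))%nat then / INR b else 0.

Lemma hA_nonneg m a b : 0 <= hA m a b.
Proof. unfold hA. destruct (_ && _)%bool eqn:E; [|lra].
  apply andb_prop in E as [E _]. apply Nat.leb_le in E. left; apply Rinv_0_lt_compat, lt_0_INR; lia. Qed.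
Lemma hB_nonneg m a b : 0 <= hB m a b.
Proof. unfold hB. destruct (_ && _)%bool eqn:E; [|lra].
  apply andb_prop in E as [E _]. apply andb_prop in E as [_ E]. apply Nat.leb_le in E.
  left; apply Rinv_0_lt_compat, lt_0_INR; lia. Qed.

Definition Gl (m k j : nat) : R := Rmax 0 (Hs k - Hs (Nat.min j m)).

Lemma point_bound m d w u r : (w + u)%nat = d ->
  Gl m (Nat.min d m) (u + r) <=
  (if (r =? 0)%nat then 1 else 0) * (INR w * hA m (w - 1) (S u)) + INR w * hB m (w - 1) (S u).
Proof.
  intros Hd. set (k := Nat.min d m). set (j := (u + r)%nat).
  pose proof (hA_nonneg m (w-1) (S u)). pose proof (hB_nonneg m (w-1) (S u)).
  pose proof (pos_INR w).
  assert (0 <= INR w * hA m (w-1) (S u)) by (apply Rmult_le_pos; lra).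
  assert (0 <= INR w * hB m (w-1) (S u)) by (apply Rmult_le_pos; lra).
  assert (0 <= (if (r =? 0)%nat then 1 else 0) * (INR w * hA m (w - 1) (S u))).
  { destruct (r =? 0)%nat; lra. }
  unfold Gl. destruct (le_lt_dec k (Nat.min j m)) as [Hle|Hlt].
  - pose proof (Hs_mono _ _ Hle). rewrite Rmax_left; lra.
  - assert (Hj : Nat.min j m = j) by lia. rewrite Hj in *.
    assert (Hjk : (j <= k)%nat) by lia.
    pose proof (Hs_diff _ _ Hjk) as HD.
    assert (INR (k - j) / INR (S j) <= INR w / INR (S u)).
    { unfold Rdiv. apply Rmult_le_compat. apply pos_INR.
      left; apply Rinv_0_lt_compat, lt_0_INR; lia. apply le_INR; lia.
      apply Rinv_le_contravar. apply lt_0_INR; lia. apply le_INR; lia. }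
    apply Rmax_lub; [lra|].
    destruct r as [|r].
    + simpl. unfold hA. replace ((1 <=? S u) && (S u <=? m))%bool with true.
      2:{ symmetry. apply andb_true_intro; split; apply Nat.leb_le; lia. }
      unfold Rdiv in *. lra.
    + simpl (S r =? 0)%nat. unfold hB.
      replace ((1 <=? w - 1) && (1 <=? S u) && (S u <=? m))%bool with true.
      2:{ symmetry. apply andb_true_intro; split; [apply andb_true_intro; split|]; apply Nat.leb_le; lia. }
      unfold Rdiv in *. lra.
Qed.

Lemma Ex_cw (p : R) (x o : list bool) c : Ex p x o (fun w u r => c * INR w) = c * (p * INR (hdist x o)).
Proof.
  rewrite (Ex_ext _ _ _ _ (fun w u r => c * (0 + INR w) + 0 * 0)) by (intros; ring).
  rewrite Ex_lin, Ex_w. ring.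
Qed.

Lemma Ex_nonneg p x o (f : nat -> nat -> nat -> R) : 0 <= p <= 1 ->
  (forall w u r, 0 <= f w u r) -> 0 <= Ex p x o f.
Proof. intros Hp H. rewrite <- (Ex_const p x o 0). apply Ex_mono; auto. Qed.

Lemma core (n m : nat) (x o : list bool) : (2 <= n)%nat -> (1 <= m)%nat ->
  length x = n -> length o = n ->
  Ex (/ INR n) x o (fun w u r => Gl m (Nat.min (hdist x o) m) (u + r)) <=
  (/ INR n) / (1 - / INR n) * ((1 - / INR n) ^ (n - m) + 2 * INR (m + 1) * / INR n).
Proof.
  intros Hn Hm Hx Ho. set (p := / INR n). set (q := 1 - p). set (d := hdist x o).
  assert (HnR : 2 <= INR n) by (replace 2 with (INR 2) by (simpl; ring); apply le_INR; lia).
  assert (Hp0 : 0 < p) by (unfold p; apply Rinv_0_lt_compat; lra).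
  assert (Hp2 : p <= / 2) by (unfold p; apply Rinv_le_contravar; lra).
  assert (Hp : 0 <= p <= 1) by lra.
  assert (Hq : / 2 <= q <= 1) by (unfold q; lra).
  assert (Hp1 : p <> 1) by lra.
  assert (Hnr : nr x o = (n - d)%nat) by (pose proof (nr_hd x o ltac:(congruence)); unfold d; lia).
  eapply Rle_trans.
  { apply (Ex_mono p x Hp o _
      (fun w u r => 1 * ((if (r =? 0)%nat then 1 else 0) * (INR w * hA m (w - 1) (S u))) +
                    1 * (INR w * hB m (w - 1) (S u)))).
    intros w u r Hw. rewrite !Rmult_1_l. apply point_bound. exact Hw. }
  rewrite Ex_lin.
  rewrite (Ex_r0 p x o (fun w u => INR w * hA m (w - 1) (S u))).
  rewrite (Ex_pair p x Hp1 o (hA m)), (Ex_pair p x Hp1 o (hB m)).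
  set (EA := Ex p x o (fun w u _ => INR u * hA m w u)).
  set (EB := Ex p x o (fun w u _ => INR u * hB m w u)).
  assert (EA0 : 0 <= EA).
  { apply Ex_nonneg; auto. intros; apply Rmult_le_pos; [apply pos_INR|apply hA_nonneg]. }
  assert (EB0 : 0 <= EB).
  { apply Ex_nonneg; auto. intros; apply Rmult_le_pos; [apply pos_INR|apply hB_nonneg]. }
  assert (Hpq : 0 < p / q) by (apply Rdiv_lt_0_compat; lra).
  assert (Hqn : 0 <= q ^ (n - m)) by (apply pow_le; lra).
  assert (Hmr : 1 <= INR (m + 1)) by (rewrite plus_INR; simpl; pose proof (pos_INR m); lra).
  rewrite Hnr.
  destruct (le_lt_dec d m) as [Hdm|Hdm].
  - assert (EA1 : EA <= 1).
    { unfold EA. rewrite <- (Ex_const p x o 1). apply Ex_mono; auto. intros w u r _.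
      unfold hA. destruct ((1 <=? u) && (u <=? m))%bool eqn:E; [|lra].
      apply andb_prop in E as [E _]. apply Nat.leb_le in E.
      rewrite Rinv_r; [lra|]. apply not_0_INR; lia. }
    assert (EB1 : EB <= p * INR m).
    { apply Rle_trans with (p * INR d).
      - unfold EB. replace (p * INR d) with (Ex p x o (fun w u r => 1 * INR w)) by (rewrite Ex_cw; fold d; ring).
        apply Ex_mono; auto. intros w u r _.
        rewrite Rmult_1_l. unfold hB.
        destruct ((1 <=? w) && (1 <=? u) && (u <=? m))%bool eqn:E; [|rewrite Rmult_0_r; apply pos_INR].
        apply andb_prop in E as [E _]. apply andb_prop in E as [E1 E2]. apply Nat.leb_le in E1, E2.
        rewrite Rinv_r by (apply not_0_INR; lia). replace 1 with (INR 1) by reflexivity. apply le_INR; lia.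
      - apply Rmult_le_compat_l; [lra|]. apply le_INR; lia. }
    assert (Hpow : q ^ (n - d) <= q ^ (n - m)) by (apply pow_le_anti; [lra|lia]).
    assert (q ^ (n - d) * (p / q * EA) <= q ^ (n - m) * (p / q)).
    { apply Rle_trans with (q ^ (n - d) * (p / q * 1)).
      - apply Rmult_le_compat_l. apply pow_le; lra. apply Rmult_le_compat_l; lra.
      - rewrite Rmult_1_r. apply Rmult_le_compat_r; lra. }
    assert (p / q * EB <= p / q * (2 * INR (m + 1) * p)).
    { apply Rmult_le_compat_l; [lra|]. rewrite plus_INR in *. simpl in *. nra. }
    fold q. rewrite Rmult_plus_distr_l, (Rmult_comm (p / q) (q ^ (n - m))). lra.
  - assert (Hdm' : 0 < INR (d - m)) by (apply lt_0_INR; lia).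
    assert (Hbd : forall h : nat -> nat -> nat -> R,
       (forall w u r, (w + u)%nat = d -> h w u r <= / INR (d - m) * INR w) ->
       Ex p x o h <= p * INR (m + 1)).
    { intros h Hh. eapply Rle_trans. apply (Ex_mono p x Hp o _ (fun w u r => / INR (d - m) * INR w)).
      exact Hh. rewrite Ex_cw. fold d.
      apply Rle_trans with (p * (INR d / INR (d - m))). right; unfold Rdiv; ring.
      apply Rmult_le_compat_l; [lra|]. apply Rmult_le_reg_r with (INR (d - m)); auto.
      unfold Rdiv. rewrite Rmult_assoc, Rinv_l by lra. rewrite Rmult_1_r.
      rewrite <- mult_INR. apply le_INR. nia. }
    assert (EA1 : EA <= p * INR (m + 1)).
    { apply Hbd. intros w u r Hw. unfold hA.
      destruct ((1 <=? u) && (u <=? m))%bool eqn:E.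
      - apply andb_prop in E as [E1 E2]. apply Nat.leb_le in E1, E2.
        rewrite Rinv_r by (apply not_0_INR; lia).
        apply Rmult_le_reg_l with (INR (d - m)); auto. rewrite <- Rmult_assoc, Rinv_r by lra.
        rewrite Rmult_1_r, Rmult_1_l. apply le_INR; lia.
      - rewrite Rmult_0_r. apply Rmult_le_pos. left; apply Rinv_0_lt_compat; lra. apply pos_INR. }
    assert (EB1 : EB <= p * INR (m + 1)).
    { apply Hbd. intros w u r Hw. unfold hB.
      destruct ((1 <=? w) && (1 <=? u) && (u <=? m))%bool eqn:E.
      - apply andb_prop in E as [E E2]. apply andb_prop in E as [_ E1]. apply Nat.leb_le in E1, E2.
        rewrite Rinv_r by (apply not_0_INR; lia).
        apply Rmult_le_reg_l with (INR (d - m)); auto. rewrite <- Rmult_assoc, Rinv_r by lra.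
        rewrite Rmult_1_r, Rmult_1_l. apply le_INR; lia.
      - rewrite Rmult_0_r. apply Rmult_le_pos. left; apply Rinv_0_lt_compat; lra. apply pos_INR. }
    assert (Hpow : q ^ (n - d) <= 1) by (rewrite <- (pow1 (n - d)); apply pow_incr; lra).
    assert (q ^ (n - d) * (p / q * EA) <= p / q * (p * INR (m + 1))).
    { apply Rle_trans with (1 * (p / q * EA)).
      - apply Rmult_le_compat_r; [|lra]. apply Rmult_le_pos; lra.
      - rewrite Rmult_1_l. apply Rmult_le_compat_l; lra. }
    assert (p / q * EB <= p / q * (p * INR (m + 1))) by (apply Rmult_le_compat_l; lra).
    assert (p / q * (p * INR (m + 1)) * 2 <= p / q * (q ^ (n - m) + 2 * INR (m + 1) * p)).
    { assert (0 <= p / q * q ^ (n - m)) by (apply Rmult_le_pos; lra). nra. }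
    fold q. rewrite Rmult_plus_distr_l. lra.
Qed.

Lemma mutp_nonneg p x : 0 <= p <= 1 -> forall y, 0 <= mutp p x y.
Proof. intros Hp; induction x as [|a x IH]; intros [|c y]; unfold mutp; simpl; try lra.
  fold (mutp p x y). apply Rmult_le_pos; [destruct (Bool.eqb a c); lra|apply IH]. Qed.

Lemma hdist_refl x : hdist x x = 0%nat.
Proof. induction x as [|a x IH]; simpl; auto. rewrite eqb_reflx, IH. reflexivity. Qed.

Definition Phi (m : nat) (o y : list bool) : R := Hs (Nat.min (hdist y o) m).
Definition delta (n m : nat) : R :=
  (/ INR n) / (1 - / INR n) * ((1 - / INR n) ^ (n - m) + 2 * INR (m + 1) * / INR n).

Lemma sumB_mut_G n x o G : length x = n -> length o = n ->
  sumB n (fun y => mut n x y * G (hdist y o)) = Ex (/ INR n) x o (fun w u r => G (u + r)%nat).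
Proof. intros Hx Ho. exact (key_sum (/ INR n) n x o Hx Ho G). Qed.

Lemma sum_mut n x : length x = n -> sumB n (fun y => mut n x y) = 1.
Proof. intros Hx.
  transitivity (sumB n (fun y => mut n x y * (fun _ => 1) (hdist y x))).
  - rewrite !sumB_eq. apply sumL_ext; intros; ring.
  - etransitivity; [apply (sumB_mut_G n x x (fun _ => 1) Hx Hx)|]. apply Ex_const. Qed.

Lemma core_sum n m x o : (2 <= n)%nat -> (1 <= m)%nat -> length x = n -> length o = n ->
  Phi m o x - delta n m <= sumB n (fun y => mut n x y * Rmin (Phi m o x) (Phi m o y)).
Proof.
  intros Hn Hm Hx Ho.
  transitivity (sumB n (fun y => mut n x y *
       (fun j => Phi m o x - Gl m (Nat.min (hdist x o) m) j) (hdist y o))).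
  2:{ right. rewrite !sumB_eq. apply sumL_ext. intros y _. f_equal. unfold Phi, Gl.
      unfold Rmin, Rmax. destruct (Rle_dec _ _), (Rle_dec _ _); lra. }
  rewrite (sumB_mut_G n x o (fun j => Phi m o x - Gl m (Nat.min (hdist x o) m) j) Hx Ho).
  rewrite (Ex_ext _ _ _ _ (fun w u r => 1 * (fun _ _ _ => Phi m o x) w u r +
                                     (-1) * (fun w u r => Gl m (Nat.min (hdist x o) m) (u + r)) w u r))
    by (intros; ring).
  rewrite Ex_lin, Ex_const.
  pose proof (core n m x o Hn Hm Hx Ho). unfold delta. lra.
Qed.

Lemma fold_min_in (f : list bool -> R) l i :
  fold_right (fun z m => Rmin (f z) m) i l = i \/
  exists z, In z l /\ fold_right (fun z m => Rmin (f z) m) i l = f z.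
Proof. induction l as [|a l IH]; simpl; auto.
  destruct (Rle_dec (f a) (fold_right (fun z m => Rmin (f z) m) i l)) as [Hl|Hl].
  - right. exists a. rewrite Rmin_left by auto. auto.
  - rewrite Rmin_right by lra.
    destruct IH as [H|[z [Hz H]]]; [left|right; exists z]; auto. Qed.

Lemma fold_min_le (f : list bool -> R) l i z : In z l -> fold_right (fun z m => Rmin (f z) m) i l <= f z.
Proof. induction l as [|a l IH]; simpl; [tauto|]. intros [<-|H].
  - apply Rmin_l.
  - eapply Rle_trans; [apply Rmin_r|auto]. Qed.

Lemma fmin_attained n f : exists z, In z (bits n) /\ fmin n f = f z.
Proof. unfold fmin. destruct (fold_min_in f (bits n) (f (repeat false n))) as [H|H]; auto.
  exists (repeat false n). split; auto. apply bits_complete. apply repeat_length. Qed.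

Lemma fmin_le n f z : In z (bits n) -> fmin n f <= f z.
Proof. apply fold_min_le. Qed.

Lemma notopt_01 n f y : notopt n f y = 0 \/ notopt n f y = 1.
Proof. unfold notopt. destruct (Req_EM_T _ _); auto. Qed.

Lemma notopt_zero n f xs y : unique_min n f -> In xs (bits n) -> (forall z, In z (bits n) -> z <> xs -> f xs < f z) ->
  In y (bits n) -> notopt n f y = 0 -> y = xs.
Proof. intros _ Hxs Hu Hy H. unfold notopt in H. destruct (Req_EM_T _ _) as [E|E]; [|lra].
  destruct (list_eq_dec Bool.bool_dec y xs) as [|Hne]; auto.
  pose proof (Hu y Hy Hne). pose proof (fmin_le n f xs Hxs). lra. Qed.

Definition Pm n f t y :=
  sumB n (fun x => qEA n f t x * (if Rle_dec (f y) (f x) then mut n x y else 0))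
  + qEA n f t y * sumB n (fun z => if Rle_dec (f z) (f y) then 0 else mut n y z).

Lemma qEA_S n f t y : qEA n f (S t) y = notopt n f y * Pm n f t y.
Proof. reflexivity. Qed.

Lemma sumL_scal_r l c g : sumL l (fun y => g y * c) = sumL l g * c.
Proof. rewrite (sumL_ext _ _ (fun y => c * g y)) by (intros; ring). rewrite sumL_scal; ring. Qed.

Lemma massP n f t (g : list bool -> R) :
  sumB n (fun y => Pm n f t y * g y) =
  sumB n (fun x => qEA n f t x * sumB n (fun y => mut n x y * (if Rle_dec (f y) (f x) then g y else g x))).
Proof.
  unfold Pm. rewrite !sumB_eq. set (B := bits n).
  rewrite (sumL_ext _ _ (fun y =>
     sumL B (fun x => qEA n f t x * (if Rle_dec (f y) (f x) then mut n x y else 0) * g y) +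
     qEA n f t y * sumL B (fun z => (if Rle_dec (f z) (f y) then 0 else mut n y z) * g y))).
  2:{ intros y _. rewrite !sumB_eq. fold B. rewrite sumL_scal_r, sumL_scal_r. ring. }
  rewrite sumL_plus.
  rewrite (sumL_swap B B (fun y x => qEA n f t x * (if Rle_dec (f y) (f x) then mut n x y else 0) * g y)).
  rewrite <- sumL_plus. apply sumL_ext. intros x _. rewrite sumB_eq. fold B.
  rewrite (sumL_ext _ _ (fun y => qEA n f t x * ((if Rle_dec (f y) (f x) then mut n x y else 0) * g y)))
    by (intros; ring).
  rewrite sumL_scal, <- Rmult_plus_distr_l. f_equal.
  rewrite <- sumL_plus. apply sumL_ext. intros y _.
  destruct (Rle_dec (f y) (f x)); ring.
Qed.

Lemma mut_nonneg n x y : (1 <= n)%nat -> 0 <= mut n x y.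
Proof. intros Hn. rewrite mut_mutp. apply mutp_nonneg.
  assert (1 <= INR n) by (replace 1 with (INR 1) by reflexivity; apply le_INR; auto).
  split. left; apply Rinv_0_lt_compat; lra. rewrite <- Rinv_1. apply Rinv_le_contravar; lra. Qed.

Lemma sumB_nonneg n g : (forall y, In y (bits n) -> 0 <= g y) -> 0 <= sumB n g.
Proof. intros H. rewrite sumB_eq.
  assert (Z : forall l, sumL l (fun _ => 0) = 0) by (induction l; unfold sumL in *; simpl; lra).
  rewrite <- (Z (bits n)). apply sumL_le. auto. Qed.

Lemma qEA_nonneg n f t y : (1 <= n)%nat -> 0 <= qEA n f t y.
Proof. intros Hn. revert y; induction t; intros y.
  - simpl. unfold Rdiv. apply Rmult_le_pos. destruct (notopt_01 n f y) as [E|E]; rewrite E; lra.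
    left. apply Rinv_0_lt_compat, pow_lt. lra.
  - rewrite qEA_S. apply Rmult_le_pos. destruct (notopt_01 n f y) as [E|E]; rewrite E; lra.
    unfold Pm. apply Rplus_le_le_0_compat.
    + apply sumB_nonneg. intros x _. apply Rmult_le_pos; auto. destruct (Rle_dec _ _); [apply mut_nonneg; auto|lra].
    + apply Rmult_le_pos; auto. apply sumB_nonneg. intros z _. destruct (Rle_dec _ _); [lra|apply mut_nonneg; auto].
Qed.

Lemma Pm_nonneg n f t y : (1 <= n)%nat -> 0 <= Pm n f t y.
Proof. intros Hn. unfold Pm. apply Rplus_le_le_0_compat.
    + apply sumB_nonneg. intros x _. apply Rmult_le_pos. apply qEA_nonneg; auto. destruct (Rle_dec _ _); [apply mut_nonneg; auto|lra].
    + apply Rmult_le_pos. apply qEA_nonneg; auto. apply sumB_nonneg. intros z _. destruct (Rle_dec _ _); [lra|apply mut_nonneg; auto].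
Qed.

Lemma tail_nonneg n f t : (1 <= n)%nat -> 0 <= tailEA n f t.
Proof. intros. apply sumB_nonneg. intros; apply qEA_nonneg; auto. Qed.

Lemma tail_S n f t : (1 <= n)%nat -> tailEA n f (S t) <= tailEA n f t.
Proof. intros Hn. unfold tailEA.
  apply Rle_trans with (sumB n (fun y => Pm n f t y * 1)).
  - rewrite !sumB_eq. apply sumL_le. intros y _. rewrite qEA_S.
    pose proof (Pm_nonneg n f t y Hn). destruct (notopt_01 n f y) as [E|E]; rewrite E; lra.
  - rewrite massP. right. rewrite !sumB_eq. apply sumL_ext. intros x Hx. rewrite sumB_eq.
    rewrite (sumL_ext _ _ (fun y => mut n x y)) by (intros; destruct (Rle_dec _ _); ring).
    rewrite <- sumB_eq, (sum_mut n x (bits_length _ _ Hx)). ring.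
Qed.

Definition Sig n f m xs t := sumB n (fun y => qEA n f t y * Phi m xs y).

Lemma Phi_xs m xs : Phi m xs xs = 0.
Proof. unfold Phi. rewrite hdist_refl. reflexivity. Qed.

Lemma Phi_le m xs y : Phi m xs y <= Hs m.
Proof. unfold Phi. apply Hs_mono. lia. Qed.

Lemma Phi_nonneg m xs y : 0 <= Phi m xs y.
Proof. apply Hs_nonneg. Qed.

Lemma notopt_Phi n f m xs y : In xs (bits n) -> (forall z, In z (bits n) -> z <> xs -> f xs < f z) ->
  In y (bits n) -> notopt n f y * Phi m xs y = Phi m xs y.
Proof. intros Hxs Hu Hy. destruct (notopt_01 n f y) as [E|E]; rewrite E; [|ring].
  assert (y = xs) by (eapply notopt_zero; eauto; exists xs; auto). subst. rewrite Phi_xs; ring. Qed.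

Lemma drift n f m xs t : (2 <= n)%nat -> (1 <= m)%nat -> In xs (bits n) ->
  (forall z, In z (bits n) -> z <> xs -> f xs < f z) ->
  Sig n f m xs t - delta n m * tailEA n f t <= Sig n f m xs (S t).
Proof.
  intros Hn Hm Hxs Hu. unfold Sig.
  assert (Hn1 : (1 <= n)%nat) by lia.
  transitivity (sumB n (fun y => Pm n f t y * Phi m xs y)).
  2:{ right. rewrite !sumB_eq. apply sumL_ext. intros y Hy. rewrite qEA_S.
      rewrite <- (notopt_Phi n f m xs y Hxs Hu Hy) at 1. ring. }
  rewrite massP. unfold tailEA. rewrite !sumB_eq.
  rewrite <- sumL_scal.
  transitivity (sumL (bits n) (fun x => qEA n f t x * (Phi m xs x - delta n m))).
  - right. symmetry. rewrite (sumL_ext (bits n) (fun x => qEA n f t x * (Phi m xs x - delta n m)) (fun x => 1 * (qEA n f t x * Phi m xs x) + (- delta n m) * qEA n f t x)) by (intros; ring).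
    rewrite sumL_plus, !sumL_scal. ring.
  - apply sumL_le. intros x Hx. apply Rmult_le_compat_l. apply qEA_nonneg; auto.
    pose proof (bits_length _ _ Hx). pose proof (bits_length _ _ Hxs).
    eapply Rle_trans. apply (core_sum n m x xs); auto.
    rewrite !sumB_eq. apply sumL_le. intros y _. apply Rmult_le_compat_l. apply mut_nonneg; auto.
    destruct (Rle_dec _ _); [apply Rmin_r|apply Rmin_l].
Qed.

Lemma Sig_le n f m xs t : (1 <= n)%nat -> Sig n f m xs t <= Hs m * tailEA n f t.
Proof. intros Hn. unfold Sig, tailEA. rewrite !sumB_eq, <- sumL_scal. apply sumL_le. intros y _.
  pose proof (qEA_nonneg n f t y Hn). pose proof (Phi_le m xs y). nra. Qed.

Lemma Sig_nonneg n f m xs t : (1 <= n)%nat -> 0 <= Sig n f m xs t.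
Proof. intros Hn. apply sumB_nonneg. intros. apply Rmult_le_pos. apply qEA_nonneg; auto. apply Phi_nonneg. Qed.

Lemma mutp_half x y : length x = length y -> mutp (/ 2) x y = (/ 2) ^ length x.
Proof. revert y; induction x as [|a x IH]; intros [|c y] H; simpl in *; try discriminate; [reflexivity|].
  injection H as H. rewrite mutp_cons, IH by auto. destruct (Bool.eqb a c); field. Qed.

Lemma Sig0 n f m xs : (2 <= n)%nat -> (4 * m <= n)%nat -> In xs (bits n) ->
  (forall z, In z (bits n) -> z <> xs -> f xs < f z) ->
  Hs m * (1 - 4 / INR n) <= Sig n f m xs 0.
Proof.
  intros Hn Hm Hxs Hu. pose proof (bits_length _ _ Hxs) as Hlx.
  assert (HnR : 2 <= INR n) by (replace 2 with (INR 2) by (simpl; ring); apply le_INR; lia).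
  unfold Sig. simpl qEA.
  transitivity (sumB n (fun y => mutp (/ 2) xs y * (fun j => Hs (Nat.min j m)) (hdist y xs))).
  2:{ right. rewrite !sumB_eq. apply sumL_ext. intros y Hy. pose proof (bits_length _ _ Hy).
      rewrite mutp_half by congruence. rewrite Hlx.
      replace (notopt n f y / 2 ^ n * Phi m xs y) with ((notopt n f y * Phi m xs y) / 2 ^ n) by (unfold Rdiv; ring).
      rewrite (notopt_Phi n f m xs y Hxs Hu Hy). unfold Phi. rewrite pow_inv. unfold Rdiv. ring. }
  apply Rle_trans with (Ex (/ 2) xs xs (fun w u r => Hs (Nat.min (u + r) m)));
    [| right; symmetry; exact (key_sum (/ 2) n xs xs Hlx Hlx (fun j => Hs (Nat.min j m)))].
  set (H := Hs m). assert (H0 : 0 <= H) by apply Hs_nonneg.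
  transitivity (Ex (/ 2) xs xs (fun w u r => H * 1 + (- 16 * H / (INR n * INR n)) * ((- (INR n / 2)) + INR r) ^ 2)).
  - rewrite Ex_lin, Ex_const, Ex_rsq.
    assert (Hnr : nr xs xs = n) by (pose proof (nr_hd xs xs eq_refl); rewrite hdist_refl in *; lia).
    rewrite Hnr. right. field. lra.
  - apply Ex_mono; [lra|]. intros w u r Hw. rewrite hdist_refl in Hw.
    assert (u = 0%nat) by lia. subst u. simpl Nat.add.
    destruct (le_lt_dec m r) as [Hr|Hr].
    + replace (Nat.min r m) with m by lia. fold H.
      assert (0 <= 16 * H / (INR n * INR n) * ((- (INR n / 2)) + INR r) ^ 2).
      { apply Rmult_le_pos; [|apply pow2_ge_0]. unfold Rdiv. apply Rmult_le_pos; [lra|].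
        left; apply Rinv_0_lt_compat; nra. }
      unfold Rdiv in *. lra.
    + assert (INR r + INR n / 4 <= INR n / 2).
      { assert (4 * INR r + INR n <= 2 * INR n); [|lra].
        replace (4 * INR r + INR n) with (INR (4 * r + n)) by (rewrite plus_INR, mult_INR; simpl; ring).
        replace (2 * INR n) with (INR (2 * n)) by (rewrite mult_INR; simpl; ring).
        apply le_INR; lia. }
      assert (INR n * INR n <= 16 * ((- (INR n / 2)) + INR r) ^ 2) by nra.
      assert (H * 1 + - 16 * H / (INR n * INR n) * (- (INR n / 2) + INR r) ^ 2 <= 0).
      { assert (0 < INR n * INR n) by nra.
        set (X := (- (INR n / 2) + INR r) ^ 2) in *.
        assert (0 <= (16 * X - INR n * INR n) / (INR n * INR n)).
        { unfold Rdiv. apply Rmult_le_pos; [lra|]. left; apply Rinv_0_lt_compat; lra. }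
        assert (16 * X / (INR n * INR n) = 1 + (16 * X - INR n * INR n) / (INR n * INR n)) by (field; lra).
        assert (- 16 * H / (INR n * INR n) * X = - (H * (16 * X / (INR n * INR n)))) by (unfold Rdiv; ring).
        nra. }
      pose proof (Hs_nonneg (Nat.min r m)). lra.
Qed.

Lemma tail_anti n f i j : (1 <= n)%nat -> (i <= j)%nat -> tailEA n f j <= tailEA n f i.
Proof. intros Hn; induction 1; [lra|]. pose proof (tail_S n f m Hn). lra. Qed.

Lemma sum_ge (g : nat -> R) c N : (forall i, (i <= N)%nat -> c <= g i) -> INR (S N) * c <= sum_f_R0 g N.
Proof. induction N; intros H.
  - simpl. specialize (H 0%nat (le_n 0)). lra.
  - change (sum_f_R0 g (S N)) with (sum_f_R0 g N + g (S N)).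
    assert (c <= g (S N)) by (apply H; lia).
    assert (INR (S N) * c <= sum_f_R0 g N) by (apply IHN; intros; apply H; lia).
    rewrite (S_INR (S N)). lra. Qed.

Lemma sum_nonneg (g : nat -> R) N : (forall i, 0 <= g i) -> 0 <= sum_f_R0 g N.
Proof. intros H; induction N; simpl; [apply H|]. pose proof (H (S N)). lra. Qed.

Lemma Sig_chain n f m xs N : (2 <= n)%nat -> (1 <= m)%nat -> In xs (bits n) ->
  (forall z, In z (bits n) -> z <> xs -> f xs < f z) ->
  Sig n f m xs 0 <= delta n m * sum_f_R0 (tailEA n f) N + Sig n f m xs (S N).
Proof. intros Hn Hm Hxs Hu. induction N; simpl.
  - pose proof (drift n f m xs 0 Hn Hm Hxs Hu). lra.
  - pose proof (drift n f m xs (S N) Hn Hm Hxs Hu). lra. Qed.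

Lemma delta_pos n m : (2 <= n)%nat -> 0 < delta n m.
Proof. intros Hn. unfold delta.
  assert (HnR : 2 <= INR n) by (replace 2 with (INR 2) by (simpl; ring); apply le_INR; lia).
  assert (0 < / INR n) by (apply Rinv_0_lt_compat; lra).
  assert (/ INR n <= / 2) by (apply Rinv_le_contravar; lra).
  assert (0 < (1 - / INR n) ^ (n - m)) by (apply pow_lt; lra).
  assert (0 <= INR (m + 1)) by apply pos_INR.
  apply Rmult_lt_0_compat. apply Rdiv_lt_0_compat; lra. nra. Qed.

Lemma EA_bound n f m : (2 <= n)%nat -> (1 <= m)%nat -> (4 * m <= n)%nat -> unique_min n f ->
  expected_time_ge n f (Hs m * (1 - 4 / INR n) / delta n m).
Proof.
  intros Hn Hm H4 [xs [Hxs Hu]] r Hr.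
  assert (Hn1 : (1 <= n)%nat) by lia.
  assert (HnR : 2 <= INR n) by (replace 2 with (INR 2) by (simpl; ring); apply le_INR; lia).
  pose proof (delta_pos n m Hn) as Hd.
  set (dl := delta n m) in *. set (Hm' := Hs m). assert (HH : 0 <= Hm') by apply Hs_nonneg.
  pose proof (Sig0 n f m xs Hn H4 Hxs Hu) as HS0.
  set (S0 := Sig n f m xs 0) in *.
  destruct (Rlt_le_dec r 0) as [Hr0|Hr0].
  { exists 0%nat. simpl. pose proof (tail_nonneg n f 0 Hn1). lra. }
  assert (HrD : r * dl < S0).
  { apply Rmult_lt_compat_r with (r := dl) in Hr; auto.
    assert (Hs m * (1 - 4 / INR n) / dl * dl = Hs m * (1 - 4 / INR n)) by (field; split; lra).
    lra. }
  set (D := S0 - r * dl).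
  assert (Heps : 0 < D / (r * Hm' + 1)) by (apply Rdiv_lt_0_compat; unfold D; nra).
  destruct (archimed_cor1 _ Heps) as [N0 [HN0 HN0pos]].
  exists (N0 - 1)%nat.
  set (N := (N0 - 1)%nat). assert (HSN : S N = N0) by (unfold N; lia).
  set (sm := sum_f_R0 (tailEA n f) N).
  destruct (Rlt_le_dec r sm) as [|Hle]; [auto|exfalso].
  assert (Hsm0 : 0 <= sm) by (apply sum_nonneg; intros; apply tail_nonneg; auto).
  pose proof (Sig_chain n f m xs N Hn Hm Hxs Hu) as HC. fold S0 dl sm in HC.
  pose proof (Sig_le n f m xs (S N) Hn1) as HL. fold Hm' in HL.
  assert (HT : INR (S N) * tailEA n f (S N) <= sm).
  { apply sum_ge. intros i Hi. apply tail_anti; auto. }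
  rewrite HSN in HT, HL, HC.
  assert (HN0R : 0 < INR N0) by (apply lt_0_INR; lia).
  assert (Ht : tailEA n f N0 <= r / INR N0).
  { apply Rmult_le_reg_l with (INR N0); auto. unfold Rdiv.
    rewrite <- Rmult_assoc, (Rmult_comm (INR N0) r), Rmult_assoc, Rinv_r by lra. lra. }
  assert (Hx : Hm' * (r / INR N0) < D).
  { apply Rle_lt_trans with ((r * Hm' + 1) * / INR N0).
    - unfold Rdiv. assert (0 < / INR N0) by (apply Rinv_0_lt_compat; lra). nra.
    - apply Rmult_lt_reg_r with (/ (r * Hm' + 1)). apply Rinv_0_lt_compat; nra.
      replace ((r * Hm' + 1) * / INR N0 * / (r * Hm' + 1)) with (/ INR N0) by (field; nra).
      exact HN0. }
  assert (Hm' * tailEA n f N0 <= Hm' * (r / INR N0)) by (apply Rmult_le_compat_l; auto).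
  assert (dl * sm <= dl * r) by (apply Rmult_le_compat_l; lra).
  unfold D in Hx. lra.
Qed.

Lemma exp_ge1 x : 1 + x <= exp x.
Proof. destruct (Req_dec x 0) as [->|H]. rewrite exp_0; lra. left; apply exp_ineq1; auto. Qed.

Lemma ln_le_sub1 x : 0 < x -> ln x <= x - 1.
Proof. intros Hx. rewrite <- (ln_exp (x - 1)). destruct (Req_dec x 1) as [->|H].
  - replace (1 - 1) with 0 by ring. rewrite exp_0. lra.
  - left. apply ln_increasing; auto. pose proof (exp_ineq1 (x - 1)). assert (x - 1 <> 0) by lra. specialize (H0 H1). lra. Qed.

Lemma Hs_ln m : ln (INR (S m)) <= Hs m.
Proof. induction m.
  - simpl. rewrite ln_1. lra.
  - cbn [Hs]. 
    assert (Hpos : 0 < INR (S m)) by (apply lt_0_INR; lia).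
    assert (ln (INR (S (S m))) = ln (INR (S m)) + ln (INR (S (S m)) / INR (S m))).
    { rewrite <- ln_mult; [|lra|apply Rdiv_lt_0_compat; [apply lt_0_INR; lia|lra]]. f_equal. field. lra. }
    pose proof (ln_le_sub1 (INR (S (S m)) / INR (S m)) ltac:(apply Rdiv_lt_0_compat; [apply lt_0_INR; lia|lra])).
    assert (INR (S (S m)) / INR (S m) - 1 = / INR (S m)) by (rewrite (S_INR (S m)); field; lra).
    lra. Qed.

Lemma exp_pow_nat x j : exp x ^ j = exp (INR j * x).
Proof. induction j; simpl. rewrite Rmult_0_l, exp_0; reflexivity.
  rewrite IHj. rewrite <- exp_plus. f_equal. destruct j; simpl; ring. Qed.

Lemma e_le_4 : exp 1 <= 4.
Proof. assert (exp (-1/2) >= 1/2) by (pose proof (exp_ge1 (-1/2)); lra).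
  assert (exp 1 = / (exp (-1/2) * exp (-1/2))).
  { rewrite <- exp_plus. replace (-1/2 + -1/2) with (Ropp 1) by field. rewrite exp_Ropp. field. pose proof (exp_pos 1); lra. }
  rewrite H0. assert (0 < exp (-1/2) * exp (-1/2)) by nra.
  replace 4 with (/ (1/4)) by field. apply Rinv_le_contravar; [lra|nra]. Qed.

Lemma exp_le_inv y : 0 <= y < 1 -> exp y <= 1 / (1 - y).
Proof. intros Hy. pose proof (exp_ge1 (- y)). rewrite exp_Ropp in H.
  pose proof (exp_pos y). unfold Rdiv. rewrite Rmult_1_l.
  apply Rmult_le_reg_r with (1 - y); [lra|]. rewrite Rinv_l by lra.
  apply Rmult_le_reg_l with (/ exp y). apply Rinv_0_lt_compat; lra.
  rewrite <- Rmult_assoc, Rinv_l by lra. lra. Qed.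

Lemma ln1L_le L : 0 <= L -> ln (1 + L) <= 2 * sqrt L.
Proof. intros HL. set (s := sqrt L). assert (Hs : 0 <= s) by apply sqrt_pos.
  assert (Hss : s * s = L) by (apply sqrt_sqrt; auto).
  rewrite <- (ln_exp (2 * s)). destruct (Req_dec L 0) as [->|HL0].
  - rewrite Rplus_0_r, ln_1. rewrite ln_exp. lra.
  - left. apply ln_increasing; [lra|].
    replace (2 * s) with (s + s) by ring. rewrite exp_plus.
    pose proof (exp_ge1 s). assert (0 < s) by (destruct Hs as [|Hs]; auto; subst s; rewrite <- Hs in Hss; lra).
    nra. Qed.

Lemma eNdelta n m (k : R) : (2 <= n)%nat -> (m <= n)%nat -> 2 <= k -> INR m * k <= INR n ->
  exp 1 * INR n * delta n m <= INR n / (INR n - 1) * (k / (k - 1) + 8 * (INR m + 1) / INR n).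
Proof.
  intros Hn Hmn Hk HmN.
  assert (HN : 2 <= INR n) by (replace 2 with (INR 2) by (simpl; ring); apply le_INR; lia).
  set (N := INR n) in *. set (M := INR m) in *.
  assert (HM : 0 <= M) by apply pos_INR.
  set (p := / N). assert (Hp : 0 < p <= / 2) by (split; [apply Rinv_0_lt_compat; lra|apply Rinv_le_contravar; lra]).
  set (q := 1 - p). assert (Hq0 : / 2 <= q) by (unfold q; lra).
  assert (Hqe : q <= exp (- p)) by (pose proof (exp_ge1 (- p)); unfold q; lra).
  assert (A1 : q ^ (n - m) <= exp (- p) ^ (n - m)) by (apply pow_incr; lra).
  rewrite exp_pow_nat in A1. rewrite minus_INR in A1 by auto. fold N M in A1.
  assert (A2 : (N - M) * - p = - 1 + M / N) by (unfold p; field; lra).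
  rewrite A2, exp_plus in A1.
  assert (A3 : exp 1 * exp (-1) = 1) by (rewrite <- exp_plus; replace (1 + -1) with 0 by ring; apply exp_0).
  assert (HMN : M / N <= / k).
  { replace (/ k) with (N / (N * k)) by (field; lra). replace (M / N) with (M * k / (N * k)) by (field; lra).
    unfold Rdiv. apply Rmult_le_compat_r. left; apply Rinv_0_lt_compat; nra. lra. }
  assert (Hk2 : / k <= / 2) by (apply Rinv_le_contravar; lra).
  assert (HMN0 : 0 <= M / N) by (unfold Rdiv; apply Rmult_le_pos; [lra|left; apply Rinv_0_lt_compat; lra]).
  assert (A4 : exp (M / N) <= k / (k - 1)).
  { eapply Rle_trans. apply exp_le_inv. lra.
    replace (k / (k - 1)) with (1 / (1 - / k)) by (field; lra).
    unfold Rdiv. rewrite !Rmult_1_l. apply Rinv_le_contravar; lra. }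
  unfold delta. fold N p. fold q. rewrite plus_INR. simpl (INR 1). fold M.
  assert (B1 : exp 1 * q ^ (n - m) <= k / (k - 1)).
  { apply Rle_trans with (exp 1 * (exp (-1) * exp (M / N))).
    apply Rmult_le_compat_l. left; apply exp_pos. exact A1.
    rewrite <- Rmult_assoc, A3, Rmult_1_l. exact A4. }
  assert (B2 : exp 1 * (2 * (M + 1) * p) <= 8 * (M + 1) / N).
  { pose proof e_le_4. unfold p, Rdiv. assert (0 <= (M + 1) * / N) by (apply Rmult_le_pos; [lra|left; apply Rinv_0_lt_compat; lra]).
    nra. }
  replace (exp 1 * N * (p / q * (q ^ (n - m) + 2 * (M + 1) * p)))
    with (/ q * (exp 1 * q ^ (n - m) + exp 1 * (2 * (M + 1) * p))) by (unfold p; field; lra).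
  replace (N / (N - 1)) with (/ q) by (unfold q, p; field; lra).
  apply Rmult_le_compat_l. left; apply Rinv_0_lt_compat; lra. lra.
Qed.

Definition Kn n := S (Nat.log2 n).
Definition mmn n := (n / Kn n)%nat.
Definition epsn n := 100 / sqrt (INR (Kn n)).

Lemma bound_main n : (1 <= n)%nat -> epsn n < 1 ->
  (2 <= n)%nat /\ (1 <= mmn n)%nat /\ (4 * mmn n <= n)%nat /\
  (1 - epsn n) * exp 1 * INR n * ln (INR n) <= Hs (mmn n) * (1 - 4 / INR n) / delta n (mmn n).
Proof.
  intros Hn1 He. unfold epsn, mmn in *.
  set (L := Nat.log2 n) in *. set (K := Kn n) in *. assert (HK : K = S L) by reflexivity.
  set (m := (n / K)%nat).
  set (k := INR K) in *. set (s := sqrt k) in *.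
  assert (Hk0 : 0 <= k) by apply pos_INR.
  assert (Hss : s * s = k) by (apply sqrt_sqrt; auto).
  assert (Hs0 : 0 <= s) by apply sqrt_pos.
  assert (Hs100 : 100 < s).
  { assert (Hk1 : 1 <= k) by (unfold k; rewrite HK, S_INR; pose proof (pos_INR L); lra).
    assert (E : s <> 0) by (intro E; rewrite E in Hss; lra).
    apply Rmult_lt_reg_r with (/ s). apply Rinv_0_lt_compat; lra.
    rewrite Rinv_r by auto. unfold Rdiv in He. lra. }
  set (t := / s). assert (Ht : 0 < t < / 100) by (split; [apply Rinv_0_lt_compat; lra|apply Rinv_lt_contravar; nra]).
  assert (Hst : s * t = 1) by (unfold t; field; lra).
  assert (Heps : 100 / s = 100 * t) by (unfold t; field; lra). rewrite Heps in *.
  destruct (Nat.log2_spec n ltac:(lia)) as [HL1 HL2]. fold L in HL1, HL2.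
  assert (HLl : (L < 2 ^ L)%nat) by (apply Nat.pow_gt_lin_r; lia).
  assert (HKn : (K <= n)%nat) by lia.
  assert (HkL : k = INR L + 1) by (unfold k; rewrite HK, S_INR; ring).
  assert (Hk10 : 10000 < k) by nra.
  assert (HK4 : (4 <= K)%nat).
  { destruct (le_lt_dec 4 K) as [|Hlt]; auto. exfalso. assert (k < 4).
    { unfold k. replace 4 with (INR 4) by (simpl; ring). apply lt_INR; auto. } lra. }
  assert (HKz : K <> 0%nat) by lia.
  pose proof (Nat.div_mod n K HKz) as Hdm. pose proof (Nat.mod_upper_bound n K HKz) as Hmu.
  fold m in Hdm.
  assert (HKm : (K * m <= n)%nat) by lia.
  assert (HKm1 : (n < K * (m + 1))%nat) by lia.
  assert (Hm1 : (1 <= m)%nat) by nia.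
  assert (Hm4 : (4 * m <= n)%nat) by nia.
  assert (Hn2 : (2 <= n)%nat) by lia.
  split; [exact Hn2|]. split; [exact Hm1|]. split; [exact Hm4|].
  set (N := INR n).
  assert (HNk : k <= N) by (apply le_INR; auto).
  set (M := INR m).
  assert (HMk : M * k <= N) by (unfold M, k, N; rewrite <- mult_INR; apply le_INR; lia).
  assert (HMk1 : N < k * (M + 1)).
  { replace (k * (M + 1)) with (INR (K * (m + 1))) by (rewrite mult_INR, plus_INR; reflexivity).
    apply lt_INR; lia. }
  assert (HM1 : 1 <= M) by (unfold M; replace 1 with (INR 1) by reflexivity; apply le_INR; auto).
  assert (HlnN : k / 4 <= ln N).
  { assert (INR (2 ^ L) <= N) by (apply le_INR; auto).
    rewrite pow_INR in H. replace (INR 2) with 2 in H by (simpl; ring).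
    assert (ln (2 ^ L) <= ln N).
    { destruct H as [Hlt|Heq]; [|rewrite Heq; lra].
      left; apply ln_increasing; [apply pow_lt; lra|lra]. }
    rewrite ln_pow in H0 by lra. pose proof ln_lt_2. pose proof (pos_INR L). nra. }
  assert (Hlnk : ln k <= 2 * s).
  { rewrite HkL, Rplus_comm. eapply Rle_trans. apply ln1L_le. apply pos_INR.
    apply Rmult_le_compat_l; [lra|]. unfold s. apply sqrt_le_1_alt. lra. }
  assert (HHs : ln N - ln k <= Hs m).
  { eapply Rle_trans; [|apply Hs_ln]. rewrite S_INR. fold M.
    assert (ln N - ln k = ln (N / k)).
    { unfold Rdiv. rewrite ln_mult, ln_Rinv by (try apply Rinv_0_lt_compat; lra). ring. }
    rewrite H. left. apply ln_increasing. apply Rdiv_lt_0_compat; lra.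
    apply Rmult_lt_reg_r with k; [lra|]. unfold Rdiv. rewrite Rmult_assoc, Rinv_l by lra. lra. }
  assert (H1 : ln N * (1 - 8 * t) <= Hs m).
  { assert (2 * s <= 8 * t * ln N).
    { apply Rle_trans with (8 * t * (k / 4)). 
      - replace (8 * t * (k / 4)) with (2 * (t * k)) by field. rewrite <- Hss.
        replace (t * (s * s)) with ((s * t) * s) by ring. rewrite Hst. lra.
      - apply Rmult_le_compat_l; lra. }
    lra. }
  assert (Hk2 : 2 <= k) by lra.
  pose proof (eNdelta n m k Hn2 ltac:(lia) Hk2 HMk) as H2. fold N M in H2.
  assert (Hu : / k = t * t) by (rewrite <- Hss; unfold t; field; lra).
  assert (HN1 : N / (N - 1) <= 1 + 2 * (t * t)).
  { rewrite <- Hu. replace (N / (N - 1)) with (1 + / (N - 1)) by (field; lra).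
    assert (/ (N - 1) <= 2 / k); [|unfold Rdiv in *; lra].
    replace (2 / k) with (/ (k / 2)) by (field; lra). apply Rinv_le_contravar; lra. }
  assert (Hkk : k / (k - 1) <= 1 + 2 * (t * t)).
  { rewrite <- Hu. replace (k / (k - 1)) with (1 + / (k - 1)) by (field; lra).
    assert (/ (k - 1) <= 2 / k); [|unfold Rdiv in *; lra].
    replace (2 / k) with (/ (k / 2)) by (field; lra). apply Rinv_le_contravar; lra. }
  assert (H8 : 8 * (M + 1) / N <= 16 * (t * t)).
  { rewrite <- Hu. apply Rmult_le_reg_r with (N * k); [nra|].
    unfold Rdiv. replace (8 * (M + 1) * / N * (N * k)) with (8 * ((M + 1) * k)) by (field; lra).
    replace (16 * / k * (N * k)) with (16 * N) by (field; lra). nra. }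
  assert (Hd : 0 < delta n m) by (apply delta_pos; auto).
  assert (H2' : exp 1 * N * delta n m <= 1 + 21 * t).
  { eapply Rle_trans; [exact H2|].
    assert (0 <= 8 * (M + 1) / N) by (unfold Rdiv; apply Rmult_le_pos; [lra|left; apply Rinv_0_lt_compat; lra]).
    assert (1 <= k / (k - 1)) by (apply Rmult_le_reg_r with (k - 1); [lra|]; unfold Rdiv; rewrite Rmult_assoc, Rinv_l; lra).
    assert (0 <= N / (N - 1)) by (apply Rlt_le, Rdiv_lt_0_compat; lra).
    apply Rle_trans with ((1 + 2 * (t * t)) * (1 + 2 * (t * t) + 16 * (t * t))).
    - apply Rmult_le_compat; lra.
    - assert (Htt : t * t <= t / 100) by nra.
      assert (Htt2 : (t * t) * (t * t) <= t * t) by nra.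
      replace ((1 + 2 * (t * t)) * (1 + 2 * (t * t) + 16 * (t * t))) with
        (1 + 20 * (t * t) + 36 * ((t * t) * (t * t))) by ring. lra. }
  assert (Hln0 : 0 < ln N) by lra.
  assert (H4N : 1 - 4 * t <= 1 - 4 / N).
  { assert (/ N <= t * t) by (rewrite <- Hu; apply Rinv_le_contravar; lra). unfold Rdiv. nra. }
  apply Rmult_le_reg_r with (delta n m); auto.
  replace (Hs m * (1 - 4 / N) / delta n m * delta n m) with (Hs m * (1 - 4 / N)) by (field; lra).
  apply Rle_trans with ((1 - 100 * t) * ln N * (1 + 21 * t)).
  { replace ((1 - 100 * t) * exp 1 * N * ln N * delta n m) with ((1 - 100 * t) * ln N * (exp 1 * N * delta n m)) by ring.
    apply Rmult_le_compat_l; [nra|lra]. }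
  apply Rle_trans with (ln N * (1 - 8 * t) * (1 - 4 * t)).
  { nra. }
  apply Rmult_le_compat; nra.
Qed.

Lemma etg_mono n f b b' : b' <= b -> expected_time_ge n f b -> expected_time_ge n f b'.
Proof. intros Hb H r Hr. apply H. lra. Qed.

Lemma etg_nonpos n f b : (1 <= n)%nat -> b <= 0 -> expected_time_ge n f b.
Proof. intros Hn Hb r Hr. exists 0%nat. simpl. pose proof (tail_nonneg n f 0 Hn). lra. Qed.

Lemma epsn_cv : Un_cv epsn 0.
Proof.
  intros e He. set (y := 100 / e).
  assert (Hy : 0 < y) by (unfold y; apply Rdiv_lt_0_compat; lra).
  assert (Hp : 0 < / (y * y + 1)) by (apply Rinv_0_lt_compat; nra).
  destruct (archimed_cor1 _ Hp) as [M [HM HM0]].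
  assert (HMR : 0 < INR M) by (apply lt_0_INR; lia).
  assert (HyM : y * y + 1 < INR M).
  { destruct (Rlt_le_dec (y * y + 1) (INR M)) as [|Hc]; auto.
    apply Rinv_le_contravar in Hc; auto. lra. }
  exists (2 ^ M)%nat. intros n Hn. unfold R_dist. rewrite Rminus_0_r.
  unfold epsn, Kn.
  assert (HL : (M <= Nat.log2 n)%nat).
  { rewrite <- (Nat.log2_pow2 M) by lia. apply Nat.log2_le_mono. lia. }
  assert (HK : INR M <= INR (S (Nat.log2 n))) by (apply le_INR; lia).
  assert (Hsq : y < sqrt (INR (S (Nat.log2 n)))).
  { rewrite <- (sqrt_square y) by lra. apply sqrt_lt_1_alt. nra. }
  assert (0 < 100 / sqrt (INR (S (Nat.log2 n)))) by (apply Rdiv_lt_0_compat; lra).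
  rewrite Rabs_right by lra.
  apply Rmult_lt_reg_r with (sqrt (INR (S (Nat.log2 n)))); [lra|].
  unfold Rdiv. rewrite Rmult_assoc, Rinv_l by lra.
  unfold y in Hsq. apply Rmult_lt_compat_l with (r := e) in Hsq; auto.
  replace (e * (100 / e)) with 100 in Hsq by (field; lra). lra.
Qed.

Theorem corollary7 :
  exists eps : nat -> R, Un_cv eps 0 /\
    forall (n : nat) (f : list bool -> R),
      (1 <= n)%nat -> unique_min n f ->
      expected_time_ge n f ((1 - eps n) * exp 1 * INR n * ln (INR n)).
Proof.
  exists epsn. split; [exact epsn_cv|].
  intros n f Hn Hu.
  destruct (Rlt_le_dec (epsn n) 1) as [Hl|Hl].
  - destruct (bound_main n Hn Hl) as [Hn2 [Hm1 [Hm4 Hb]]].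
    eapply etg_mono; [exact Hb|]. apply EA_bound; auto.
  - apply etg_nonpos; auto.
    assert (HN : 1 <= INR n) by (replace 1 with (INR 1) by reflexivity; apply le_INR; auto).
    assert (0 <= ln (INR n)).
    { destruct HN as [HN|HN]. left. rewrite <- ln_1. apply ln_increasing; lra. rewrite <- HN, ln_1; lra. }
    assert (0 <= exp 1 * INR n * ln (INR n)).
    { apply Rmult_le_pos; auto. apply Rmult_le_pos; [left; apply exp_pos|lra]. }
    replace ((1 - epsn n) * exp 1 * INR n * ln (INR n)) with ((1 - epsn n) * (exp 1 * INR n * ln (INR n))) by ring.
    nra.
Qed.
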